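(* Let $r>2-\sqrt2-\ln\big(2\sqrt2-2\big)$ be fixed and consider the one-parameter family of maps $f(x,k)=x^2\exp(r-x)+k$ with bifurcation parameter $k$. Then there is a unique point $x(r)\in(0,2-\sqrt2)$ and a unique parameter value $k^*$ such that $x(r)$ is a fixed point of $f(\cdot,k^* )$ in the interval $(0,2-\sqrt2)$ and the family undergoes a fold bifurcation at $x(r)$ with respect to $k$ at the bifurcation value $k=k^*$. Moreover, \[ k^*=x(r)-\frac{x(r)}{2-x(r)}. \]
   Context: For a smooth one-parameter family $x\mapsto f(x,a)$ of maps of $\mathbb{R}$ with a fixed point $x_0$ at $a=a_0$, one says that a fold (saddle-node) bifurcation occurs at $x_0$ for $a=a_0$ if $\frac{\partial f}{\partial x}(x_0,a_0)=1$ and the nondegeneracy conditions (A.1) $\frac{\partial^2 f}{\partial x^2}(x_0,a_0)\neq0$ and (A.2) $\frac{\partial f}{\partial a}(x_0,a_0)\neq 0$ hold; then smooth invertible changes of coordinates and parameter transform the system into $\eta\mapsto\beta+\eta\pm\eta^2+O(\eta^3)$. *)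

(* Defs.v *)
From Stdlib Require Import Reals.
From Coquelicot Require Import Coquelicot.
Open Scope R_scope.

Definition fold_bifurcation (f : R -> R -> R) (x0 a0 : R) : Prop :=
  f x0 a0 = x0 /\
  is_derive (fun x => f x a0) x0 1 /\
  (exists f2 : R, is_derive_n (fun x => f x a0) 2 x0 f2 /\ f2 <> 0) /\
  (exists fa : R, is_derive (fun a => f x0 a) a0 fa /\ fa <> 0).

Definition ricker_family (r : R) (x k : R) : R := x ^ 2 * exp (r - x) + k.

(* Main.v *)
Require Import Defs.
From Stdlib Require Import Reals Lra Psatz.
From Coquelicot Require Import Coquelicot.
Open Scope R_scope.

Definition gg (r x : R) : R := x * (2 - x) * exp (r - x).
Definition gg' (r x : R) : R := (2 - 4 * x + x ^ 2) * exp (r - x).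

Lemma d1 r k x : is_derive (fun y => ricker_family r y k) x (gg r x).
Proof. unfold ricker_family, gg. auto_derive; auto. unfold Rminus; ring. Qed.

Lemma d2 r x : is_derive (gg r) x (gg' r x).
Proof. unfold gg, gg'. auto_derive; auto. unfold Rminus; ring. Qed.

Lemma dk r x k : is_derive (fun a => ricker_family r x a) k 1.
Proof. unfold ricker_family. auto_derive; auto. Qed.

Lemma s2 : sqrt 2 * sqrt 2 = 2.
Proof. apply sqrt_sqrt; lra. Qed.

Lemma s2gt : 1 < sqrt 2.
Proof. rewrite <- sqrt_1. apply sqrt_lt_1; lra. Qed.

Lemma gg'pos r x : 0 < x < 2 - sqrt 2 -> gg' r x > 0.
Proof.
  intros H. unfold gg'. apply Rmult_lt_0_compat; [|apply exp_pos].
  pose proof s2; pose proof s2gt. nra.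
Qed.

Lemma gg_incr r x y : 0 < x -> x < y -> y < 2 - sqrt 2 -> gg r x < gg r y.
Proof.
  intros. apply (incr_function (gg r) (Finite 0) (Finite (2 - sqrt 2)) (gg' r));
    simpl; auto.
  - intros; apply d2.
  - intros; apply gg'pos; lra.
Qed.

Theorem theorem2p4 (r : R) :
  r > 2 - sqrt 2 - ln (2 * sqrt 2 - 2) ->
  exists xr kstar : R,
    (0 < xr < 2 - sqrt 2 /\
     fold_bifurcation (ricker_family r) xr kstar /\
     kstar = xr - xr / (2 - xr)) /\
    (forall x k : R, 0 < x < 2 - sqrt 2 ->
       fold_bifurcation (ricker_family r) x k -> x = xr /\ k = kstar).
Proof.
  intros Hr.
  pose proof s2 as S2; pose proof s2gt as S2g.
  assert (S2l : sqrt 2 < 2) by nra.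
  assert (Hend : gg r (2 - sqrt 2) > 1).
  { unfold gg. replace ((2 - sqrt 2) * (2 - (2 - sqrt 2))) with (2 * sqrt 2 - 2) by nra.
    assert (Hc : 0 < 2 * sqrt 2 - 2) by lra.
    assert (exp (r - (2 - sqrt 2)) > exp (- ln (2 * sqrt 2 - 2))).
    { apply exp_increasing; lra. }
    rewrite exp_Ropp, exp_ln in H by lra.
    apply Rmult_lt_compat_l with (r := 2 * sqrt 2 - 2) in H; auto.
    rewrite Rinv_r in H; lra. }
  assert (Hcont : continuity (fun x => gg r x - 1)).
  { intro x. apply derivable_continuous_pt.
    exists (gg' r x - 0). apply derivable_pt_lim_minus.
    - apply is_derive_Reals, d2.
    - apply derivable_pt_lim_const. }
  assert (HA0 : (fun x => gg r x - 1) 0 < 0).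
  { unfold gg. rewrite Rmult_0_l, Rmult_0_l. lra. }
  assert (HA1 : 0 < (fun x => gg r x - 1) (2 - sqrt 2)) by lra.
  destruct (IVT (fun x => gg r x - 1) 0 (2 - sqrt 2) Hcont ltac:(lra) HA0 HA1) as [xr [Hxr Hg]].
  simpl in Hg.
  assert (Hxr' : 0 < xr < 2 - sqrt 2).
  { split; destruct Hxr as [H1 H2].
    - destruct H1 as [H1|H1]; auto. subst. unfold gg in Hg. lra.
    - destruct H2 as [H2|H2]; auto. subst. lra. }
  assert (Hg1 : gg r xr = 1) by lra.
  clear Hg Hxr.
  exists xr, (xr - xr / (2 - xr)).
  assert (Hfix : forall x k, gg r x = 1 -> 0 < x < 2 - sqrt 2 ->
            (ricker_family r x k = x <-> k = x - x / (2 - x))).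
  { intros x k Hx Hx'. unfold ricker_family. unfold gg in Hx.
    assert (x ^ 2 * exp (r - x) = x / (2 - x)).
    { apply Rmult_eq_reg_r with (2 - x); [|lra].
      replace (x / (2 - x) * (2 - x)) with x by (field; lra).
      transitivity (x * (x * (2 - x) * exp (r - x))); [ring|]. rewrite Hx; ring. }
    rewrite H. split; intros; lra. }
  split.
  - split; [exact Hxr'|]. split; [|reflexivity].
    unfold fold_bifurcation. split; [apply Hfix; auto|].
    split; [rewrite <- Hg1; apply d1|].
    split.
    + exists (gg' r xr). split.
      * simpl. apply is_derive_ext with (f := gg r).
        -- intro t. simpl. symmetry. apply is_derive_unique, d1.
        -- apply d2.
      * pose proof (gg'pos r xr Hxr'). lra.
    + exists 1. split; [apply dk|lra].
  - intros x k Hx [Hf [Hd _]].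
    assert (Hgx : gg r x = 1).
    { pose proof (d1 r k x) as D. pose proof (is_derive_unique _ _ _ D).
      pose proof (is_derive_unique _ _ _ Hd). congruence. }
    assert (x = xr).
    { destruct (Rtotal_order x xr) as [H|[H|H]]; auto.
      - pose proof (gg_incr r x xr ltac:(lra) H ltac:(lra)). lra.
      - pose proof (gg_incr r xr x ltac:(lra) H ltac:(lra)). lra. }
    subst x. split; auto. apply Hfix; auto.
Qed.
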